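(* Let $n\ge q\ge 1$ and let $\mathcal{G}$ be a requirements graph on the $n$ factors $F_1,\dots,F_n$. There exists a blocked $2^n$ factorial in blocks of size $2^q$ from which all $n$ main effects and all two-factor interactions corresponding to edges of $\mathcal{G}$ are estimable if and only if the chromatic number of $\mathcal{G}$ is at most $2^q-1$.
   Context: A blocked $2^n$ factorial in blocks of size $2^q$ is specified by a $q\times n$ generator matrix $X$ over $\mathrm{GF}(2)$ of rank $q$: the principal block is the row space of $X$ and the other blocks are its cosets in $\mathrm{GF}(2)^n$. An effect of a set $S$ of factors, with contrast $(-1)^{\sum_{j\in S}x_j}$, is estimable iff its contrast sums to zero over every block. A requirements graph is a simple graph with vertex set $\{F_1,\dots,F_n\}$ and an edge $F_iF_j$ whenever the interaction $F_iF_j$ is required to be estimable. *)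

(* Defs.v *)
From HB Require Import structures.
From mathcomp Require Import all_boot all_order all_algebra.
Set Implicit Arguments. Unset Strict Implicit. Unset Printing Implicit Defensive.
Import GRing.Theory.
Local Open Scope ring_scope.

(* Treatment combinations: row vectors x in GF(2)^n.  A blocked design is given by
   a q x n generator matrix X over GF(2); the blocks are the cosets c + rowspace(X). *)

Definition in_block (n q : nat) (X : 'M['F_2]_(q, n)) (c x : 'rV['F_2]_n) : bool :=
  ((x - c)%R <= X)%MS.

Definition contrast (n : nat) (S : {set 'I_n}) (x : 'rV['F_2]_n) : int :=
  if (\sum_(j in S) x ord0 j == 0 :> 'F_2) then 1%R else (-1)%R.

Definition estimable (n q : nat) (X : 'M['F_2]_(q, n)) (S : {set 'I_n}) : Prop :=
  forall c : 'rV['F_2]_n, (\sum_(x | in_block X c x) contrast S x)%R = 0%R.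

Definition simple_graph (n : nat) (e : rel 'I_n) : Prop :=
  symmetric e /\ irreflexive e.

Definition colorable (n : nat) (e : rel 'I_n) (k : nat) : bool :=
  [exists f : {ffun 'I_n -> 'I_k}, [forall i, forall j, e i j ==> (f i != f j)]].

Definition chromatic_number (n : nat) (e : rel 'I_n) : nat :=
  find (colorable e) (iota 0 n.+1)%N.

(* Main.v *)
Require Import Defs.
From mathcomp Require Import all_boot all_order all_algebra zify.
Set Implicit Arguments. Unset Strict Implicit. Unset Printing Implicit Defensive.
Import GRing.Theory Num.Theory.
Local Open Scope ring_scope.

Lemma F2_cases (x : 'F_2) : x = 0 \/ x = 1.
Proof.
case: x => m Hm.
case: m Hm => [|[|m]] Hm.
- by left; apply: val_inj.
- by right; apply: val_inj.
- by exfalso; move: Hm; rewrite (_ : pdiv 2 = 2).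
Qed.

Lemma F2_add_self (x : 'F_2) : x + x = 0.
Proof. case: (F2_cases x) => ->; [by rewrite addr0 | by apply: val_inj]. Qed.

Lemma F2_neq0 (x : 'F_2) : x != 0 -> x = 1.
Proof. by case: (F2_cases x) => ->; rewrite ?eqxx. Qed.

Lemma ell_add n (S : {set 'I_n}) (x y : 'rV['F_2]_n) :
  \sum_(j in S) (x + y) ord0 j = \sum_(j in S) x ord0 j + \sum_(j in S) y ord0 j.
Proof. by rewrite -big_split; apply: eq_bigr => j _; rewrite mxE. Qed.

Lemma ell_rowspace n q (X : 'M['F_2]_(q, n)) (S : {set 'I_n}) (u : 'rV['F_2]_q) :
  \sum_(j in S) (u *m X) ord0 j = \sum_i u ord0 i * \sum_(j in S) X i j.
Proof.
under eq_bigr => j _ do rewrite mxE.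
rewrite exchange_big /=; apply: eq_bigr => i _; by rewrite mulr_sumr.
Qed.

Lemma est_iff n q (X : 'M['F_2]_(q, n)) (S : {set 'I_n}) :
  estimable X S <-> exists r, \sum_(j in S) X r j != 0.
Proof.
split.
- move=> H; apply/existsP; apply: contraT; rewrite negb_exists => /forallP H0.
  have := H 0; rewrite /contrast.
  have E : forall x : 'rV['F_2]_n, in_block X 0 x -> \sum_(j in S) x ord0 j = 0.
    move=> x; rewrite /in_block subr0 => /submxP [u ->].
    rewrite ell_rowspace big1 // => i _.
    by move: (H0 i); rewrite negbK => /eqP ->; rewrite mulr0.
  rewrite (eq_bigr (fun _ => 1%R)); last by move=> x /E ->; rewrite eqxx.
  rewrite sumr_const.
  rewrite -mulr_natl mulr1 => /eqP; rewrite pnatr_eq0 => /eqP/card0_eq/(_ 0).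
  by rewrite unfold_in /= subr0 sub0mx.
- case=> r Hr c.
  set r0 := row r X.
  have Hr0 : (r0 <= X)%MS by exact: row_sub.
  have L0 : \sum_(j in S) r0 ord0 j = 1.
    by apply: F2_neq0; under eq_bigr => j _ do rewrite mxE.
  set s := \sum_(x | in_block X c x) contrast S x.
  have Hs : s = - s.
    rewrite {1}/s (reindex_inj (addIr r0)) /= -sumrN.
    apply: eq_big => x.
      rewrite /in_block; apply/idP/idP => H.
        have -> : x - c = (x + r0 - c) + (-1) *: r0.
          by rewrite scaleN1r addrAC addrK.
        by apply: addmx_sub => //; apply: scalemx_sub.
      have -> : x + r0 - c = (x - c) + r0 by rewrite addrAC.
      exact: addmx_sub.
    move=> _; rewrite /contrast ell_add L0.
    case: (F2_cases (\sum_(j in S) x ord0 j)) => ->.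
      by rewrite add0r eqxx.
    by rewrite F2_add_self eqxx opprK.
  by move: Hs; lia.
Qed.

Lemma colneq0 q n (X : 'M['F_2]_(q, n)) i :
  (col i X != 0) = [exists r, X r i != 0].
Proof.
apply/idP/idP.
- move=> H; apply: contraNT H => /existsPn H; apply/eqP/matrixP => r k.
  by rewrite !mxE; move: (H r); rewrite negbK => /eqP.
- case/existsP=> r Hr; apply: contra Hr => /eqP /matrixP /(_ r ord0).
  by rewrite !mxE => ->.
Qed.

Lemma colneq q n (X : 'M['F_2]_(q, n)) i j :
  (col i X != col j X) = [exists r, X r i != X r j].
Proof.
apply/idP/idP.
- move=> H; apply: contraNT H => /existsPn H; apply/eqP/matrixP => r k.
  by rewrite !mxE; move: (H r); rewrite negbK => /eqP.
- case/existsP=> r Hr; apply: contra Hr => /eqP /matrixP /(_ r ord0).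
  by rewrite !mxE => ->.
Qed.

Lemma est_single n q (X : 'M['F_2]_(q, n)) i :
  estimable X [set i] <-> col i X != 0.
Proof.
rewrite est_iff colneq0; split.
- by case=> r; rewrite big_set1 => H; apply/existsP; exists r.
- by case/existsP=> r H; exists r; rewrite big_set1.
Qed.

Lemma F2_addeq (a b : 'F_2) : (a + b != 0) = (a != b).
Proof.
by case: (F2_cases a) => ->; case: (F2_cases b) => ->; rewrite ?addr0 ?add0r //;
  rewrite (_ : (1 + 1 : 'F_2) = 0) //; apply: val_inj.
Qed.

Lemma est_pair n q (X : 'M['F_2]_(q, n)) i j : i != j ->
  estimable X [set i; j] <-> col i X != col j X.
Proof.
move=> Hij; rewrite est_iff colneq.
have E r : \sum_(k in [set i; j]) X r k = X r i + X r j.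
  by rewrite big_setU1 ?big_set1 // inE.
split.
- by case=> r; rewrite E F2_addeq => H; apply/existsP; exists r.
- by case/existsP=> r H; exists r; rewrite E F2_addeq.
Qed.
Lemma colorable_mono n (e : rel 'I_n) k k' : (k <= k')%N -> colorable e k -> colorable e k'.
Proof.
move=> Hk /existsP [f /forallP Hf]; apply/existsP.
exists [ffun i => widen_ord Hk (f i)]; apply/forallP => i; apply/forallP => j.
apply/implyP => Hij; rewrite !ffunE; move: (Hf i) => /forallP /(_ j) /implyP /(_ Hij).
by apply: contra => /eqP [] /val_inj ->.
Qed.

Lemma colorable_n n (e : rel 'I_n) : irreflexive e -> colorable e n.
Proof.
move=> Hirr; apply/existsP; exists [ffun i => i]; apply/forallP => i; apply/forallP => j.
apply/implyP => Hij; rewrite !ffunE; apply: contraL Hij => /eqP ->; by rewrite Hirr.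
Qed.

Lemma chrom_le_aux n (e : rel 'I_n) k : (k <= n)%N -> colorable e k -> (chromatic_number e <= k)%N.
Proof.
move=> Hkn Hc; rewrite leqNgt; apply/negP => Hlt.
have := before_find 0 Hlt; rewrite nth_iota ?add0n ?Hc //; lia.
Qed.

Lemma chrom_le n (e : rel 'I_n) k : irreflexive e -> colorable e k -> (chromatic_number e <= k)%N.
Proof.
move=> Hirr Hc; case: (leqP k n) => Hk; first exact: chrom_le_aux.
apply: leq_trans (ltnW Hk); apply: chrom_le_aux => //; exact: colorable_n.
Qed.

Lemma chrom_col n (e : rel 'I_n) : irreflexive e -> colorable e (chromatic_number e).
Proof.
move=> Hirr.
have Hh : has (colorable e) (iota 0 n.+1).
  by apply/hasP; exists n; [rewrite mem_iota; lia | exact: colorable_n].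
have Hlt : (chromatic_number e < n.+1)%N.
  by rewrite -{1}(size_iota 0 n.+1) /chromatic_number -has_find.
by have := nth_find 0 Hh; rewrite nth_iota ?add0n.
Qed.
Definition goodc n q (e : rel 'I_n) (c : 'I_n -> 'cV['F_2]_q) :=
  (forall i, c i != 0) /\ (forall i j, e i j -> c i != c j).

Definition att n q (c : 'I_n -> 'cV['F_2]_q) : {set 'I_q} :=
  [set k | [exists i, c i == delta_mx k 0]].

Arguments att {n q} c.

Lemma delta_neq0 q (k : 'I_q) : (delta_mx k 0 : 'cV['F_2]_q) != 0.
Proof.
apply/eqP => /matrixP /(_ k 0); rewrite !mxE !eqxx /=.
by move/eqP; rewrite oner_eq0.
Qed.

Lemma recolor_step n q (e : rel 'I_n) (c : 'I_n -> 'cV['F_2]_q) :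
  irreflexive e -> (q <= n)%N -> goodc e c -> (#|att c| < q)%N ->
  exists c' : 'I_n -> 'cV['F_2]_q, goodc e c' /\ (#|att c| < #|att c'|)%N.
Proof.
move=> Hirr Hqn [Hnz Hpr] Hlt.
have [k Hk] : exists k, k \notin att c.
  apply/existsP; apply: contraT; rewrite negb_exists => /forallP H.
  have Ha : att c = setT by apply/setP => k; rewrite in_setT; exact: negbNE (H k).
  by move: Hlt; rewrite Ha cardsT card_ord ltnn.
pose gd v := [forall k' : 'I_q, (c v == delta_mx k' 0) ==>
                 [exists v', (v' != v) && (c v' == c v)]].
have [v Hv] : exists v, gd v.
  apply/existsP; apply: contraT; rewrite negb_exists => /forallP H.
  have Hinj : injective c.
    move=> v1 v2 E; apply/eqP; apply: contraT => Hne.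
    move: (H v1); rewrite negb_forall => /existsP [k' ]; rewrite negb_imply => /andP [_].
    by rewrite negb_exists => /forallP /(_ v2); rewrite (eq_sym v2) Hne E eqxx.
  have Hsub : c @: 'I_n \subset (fun k => delta_mx k 0 : 'cV['F_2]_q) @: att c.
    apply/subsetP => x /imsetP [v _ ->].
    move: (H v); rewrite negb_forall => /existsP [k' ]; rewrite negb_imply => /andP [/eqP E _].
    rewrite E; apply: imset_f; rewrite inE; apply/existsP; exists v; by rewrite E.
  have := subset_leq_card Hsub; rewrite card_imset // card_ord.
  move=> H1; have := leq_trans H1 (leq_imset_card _ _); by rewrite leqNgt (leq_trans Hlt Hqn).
pose c' : 'I_n -> 'cV['F_2]_q := fun x => if x == v then delta_mx k 0 else c x.
exists c'; split; first split.
- by move=> i; rewrite /c'; case: (i == v); [exact: delta_neq0 | exact: Hnz].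
- move=> i j Hij; rewrite /c'.
  have Hnot : forall y, c y != delta_mx k 0.
    move=> y; apply: contra Hk => /eqP E; rewrite inE; apply/existsP; exists y; by rewrite E.
  case: (eqVneq i v) => Hi; case: (eqVneq j v) => Hj.
  + by move: Hij; rewrite Hi Hj Hirr.
  + by rewrite eq_sym Hnot.
  + by rewrite Hnot.
  + exact: Hpr.
- apply: proper_card; apply/properP; split.
  + apply/subsetP => k'; rewrite !inE => /existsP [x /eqP Ex].
    apply/existsP; rewrite /c'; case: (eqVneq x v) => Hx.
    * move: Hv => /forallP /(_ k') /implyP; rewrite -Hx Ex eqxx => /(_ isT).
      case/existsP => v' /andP [Hv' /eqP Ev']; exists v'.
      by rewrite (negbTE Hv') Ev'.
    * by exists x; rewrite (negbTE Hx) Ex.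
  + exists k => //; rewrite inE; apply/existsP; exists v; by rewrite /c' eqxx.
Qed.

Lemma recolor n q (e : rel 'I_n) (c : 'I_n -> 'cV['F_2]_q) :
  irreflexive e -> (q <= n)%N -> goodc e c ->
  exists c' : 'I_n -> 'cV['F_2]_q, goodc e c' /\ forall k : 'I_q, exists i, c' i = delta_mx k 0.
Proof.
move=> Hirr Hqn Hc.
suff [c' [Hc' Hm]] : exists c' : 'I_n -> 'cV['F_2]_q, goodc e c' /\ (q <= #|att c'|)%N.
  exists c'; split => // k.
  have : att c' = setT.
    by apply/eqP; rewrite eqEcard subsetT cardsT card_ord.
  move/setP/(_ k); rewrite !inE => /existsP [i /eqP E]; by exists i.
have : forall m, (m <= q)%N -> exists c' : 'I_n -> 'cV['F_2]_q, goodc e c' /\ (m <= #|att c'|)%N.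
  elim => [|m IH] Hm; first by exists c.
  have [c1 [Hc1 H1]] := IH (ltnW Hm).
  case: (ltnP m #|att c1|) => H2; first by exists c1.
  have [c2 [Hc2 H3]] := recolor_step Hirr Hqn Hc1 (leq_ltn_trans H2 Hm).
  exists c2; split => //; lia.
by move/(_ q (leqnn q)).
Qed.

Lemma cardA q : #|[set v : 'cV['F_2]_q | v != 0]| = (2 ^ q - 1)%N.
Proof.
have -> : [set v : 'cV['F_2]_q | v != 0] = [set~ 0] by apply/setP => v; rewrite !inE.
by rewrite cardsC1 card_mx card_Fp // muln1 subn1.
Qed.

Local Close Scope ring_scope.

Theorem lemma1 (n q : nat) (e : rel 'I_n) :
  1 <= q -> q <= n -> simple_graph e ->
  (exists X : 'M['F_2]_(q, n),
      \rank X = q /\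
      (forall i : 'I_n, estimable X [set i]) /\
      (forall i j : 'I_n, e i j -> estimable X [set i; j]))
  <-> chromatic_number e <= 2 ^ q - 1.
Proof.
move=> Hq Hqn [Hsym Hirr].
set A := [set v : 'cV['F_2]_q | v != 0%R].
have x0A : (delta_mx (Ordinal Hq) ord0 : 'cV['F_2]_q) \in A by rewrite inE delta_neq0.
split.
- case=> X [Hr [Hs Hp]].
  apply: (chrom_le Hirr); rewrite -cardA; apply/existsP.
  exists [ffun i => enum_rank_in x0A (col i X)].
  apply/forallP => i; apply/forallP => j; apply/implyP => Hij; rewrite !ffunE.
  have Hne : i != j by apply: contraL Hij => /eqP ->; rewrite Hirr.
  have /est_pair := Hp i j Hij => /(_ Hne) Hc.
  apply: contra Hc => /eqP E.
  have Hi : col i X \in A by rewrite inE -est_single.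
  have Hj : col j X \in A by rewrite inE -est_single.
  by rewrite -(enum_rankK_in x0A Hi) -(enum_rankK_in x0A Hj) E.
- move=> H.
  have := colorable_mono H (chrom_col Hirr); rewrite -cardA => /existsP [f /forallP Hf].
  pose c0 : 'I_n -> 'cV['F_2]_q := fun i => enum_val (f i).
  have Hg : goodc e c0.
    split.
    + by move=> i; have := enum_valP (f i); rewrite inE.
    + move=> i j Hij; move: (Hf i) => /forallP /(_ j) /implyP /(_ Hij).
      by apply: contra => /eqP /enum_val_inj ->.
  have [c' [[Hnz Hpr] Hall]] := recolor Hirr Hqn Hg.
  pose X : 'M['F_2]_(q, n) := (\matrix_(r, i) c' i r ord0)%R.
  have HX i : col i X = c' i.
    apply/matrixP => r s; rewrite !mxE; case: s => [[|//] ?].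
    by congr (c' i r _); apply: val_inj.
  have [g Hgk] := fin_all_exists Hall.
  pose M : 'M['F_2]_(n, q) := (\matrix_(i, k) (i == g k)%:R)%R.
  have HM : (X *m M = 1%:M)%R.
    apply/matrixP => r k; rewrite !mxE (bigD1 (g k)) //= big1.
      by rewrite !mxE eqxx mulr1 addr0 Hgk !mxE eqxx andbT.
    by move=> i /negbTE Hi; rewrite !mxE Hi mulr0.
  exists X; split; last split.
  + apply/eqP; rewrite eqn_leq rank_leq_row /=.
    by rewrite -{1}(mxrank1 'F_2 q) -HM mxrankM_maxl.
  + by move=> i; apply/est_single; rewrite HX.
  + move=> i j Hij; have Hne : i != j by apply: contraL Hij => /eqP ->; rewrite Hirr.
    by apply/est_pair => //; rewrite !HX; apply: Hpr.
Qed.
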